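(* Let $M$ be a proper metric space and $\mathcal{X},\mathcal{Z},\mathcal{W}$ big families in $M$ with $\mathcal{X}\Cap\mathcal{W}\subseteq\mathcal{X}\Cap\mathcal{Z}$. Then the map $HX_n(\mathcal{X},\mathcal{X}\Cap\mathcal{Z})\to HX_n(\mathcal{X}\Cup\mathcal{W},(\mathcal{X}\Cap\mathcal{Z})\Cup\mathcal{W})$ induced by the inclusion $CX_\bullet(\mathcal{X})\subseteq CX_\bullet(\mathcal{X}\Cup\mathcal{W})$ is an isomorphism for every $n$.
   Context: A big family is a collection of subsets of $M$ closed under subsets, finite unions and $R$-thickenings ($Y_R=\{x:d(x,Y)\le R\}$). $\mathcal{X}\Cap\mathcal{Y}=\{X\cap Y\}$, $\mathcal{X}\Cup\mathcal{Y}=\{X\cup Y\}$ elementwise. With $M^{n+1}$ carrying the max metric and $\Delta_R$ the $R$-thickening of the multi-diagonal, a coarse $n$-chain is a complex-valued locally finite regular Borel measure on $M^{n+1}$ supported in some $\Delta_R$; it is supported on $Y$ if it vanishes outside $Y^{n+1}$, and $CX_n(\mathcal{Y})$ consists of coarse chains supported on some member of $\mathcal{Y}$. Differential $\partial\mu=\sum_{i}(-1)^i(\pi_i)_*\mu$, $\pi_i$ omitting coordinate $i$. $HX_n(\mathcal{X},\mathcal{X}\Cap\mathcal{Y})$ is the homology of $CX_\bullet(\mathcal{X})/CX_\bullet(\mathcal{X}\Cap\mathcal{Y})$. *)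

(* Defs.v *)
From mathcomp Require Import all_boot all_order all_algebra.
From mathcomp Require Import all_classical all_reals all_analysis.
From mathcomp Require Import complex.
Import GRing.Theory Num.Theory numFieldNormedType.Exports.
Local Open Scope ring_scope.
Local Open Scope classical_set_scope.

Section Metric.
Context {R : realType} {X : Type} (d : X -> X -> R).

Definition is_metric : Prop :=
  [/\ (forall x y, 0 <= d x y), (forall x y, d x y = 0 <-> x = y),
      (forall x y, d x y = d y x) & (forall x y z, d x z <= d x y + d y z)].

Definition dopen (U : set X) : Prop :=
  forall x, U x -> exists2 e : R, 0 < e & [set y | d x y < e] `<=` U.

Definition dclosed (K : set X) : Prop := dopen (~` K).

Definition dbounded (A : set X) : Prop :=
  exists r : R, forall x y, A x -> A y -> d x y <= r.

Definition dcompact (K : set X) : Prop :=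
  forall (I : Type) (U : I -> set X), (forall i, dopen (U i)) ->
    K `<=` \bigcup_(i in [set: I]) U i ->
    exists F : set I, finite_set F /\ K `<=` \bigcup_(i in F) U i.

Definition proper_metric : Prop :=
  forall K, dclosed K -> dbounded K -> dcompact K.

Definition dborel (A : set X) : Prop := <<s dopen >> A.

Definition bborel (A : set X) : Prop := dborel A /\ dbounded A.

(* R-thickening  Y_r = {x : d(x,Y) <= r}  (d(x,Y) = inf_{y in Y} d(x,y)) *)
Definition thick (r : R) (Y : set X) : set X :=
  [set x | forall e : R, 0 < e -> exists2 y, Y y & d x y < r + e].

End Metric.

(** A measure [mu : set X -> R[i]] is only meaningful on bounded Borel sets
   (where a locally finite measure takes finite values); its values on other
   sets are irrelevant junk. *)
Section Measures.
Context {R : realType} {X : Type} (D : X -> X -> R).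

Definition cabs (z : R[i]) : R := Num.sqrt (complex.Re z ^+ 2 + complex.Im z ^+ 2).

Definition csigma_additive (mu : set X -> R[i]) : Prop :=
  forall F : nat -> set X, (forall k, dborel D (F k)) -> trivIset setT F ->
    dbounded D (\bigcup_k F k) ->
    (\sum_(k < N) complex.Re (mu (F k)) @[N --> \oo] --> complex.Re (mu (\bigcup_k F k))) /\
    (\sum_(k < N) complex.Im (mu (F k)) @[N --> \oo] --> complex.Im (mu (\bigcup_k F k))).

Definition var_le (mu : set X -> R[i]) (S : set X) (eps : R) : Prop :=
  forall F : nat -> set X, (forall k, dborel D (F k) /\ F k `<=` S) ->
    trivIset setT F -> forall N, \sum_(k < N) cabs (mu (F k)) <= eps.

Definition cregular (mu : set X -> R[i]) : Prop :=
  forall A, bborel D A -> forall eps : R, 0 < eps ->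
    exists (K : set X) (U : set X),
      [/\ dcompact D K, dopen D U, dbounded D U, K `<=` A /\ A `<=` U &
           var_le mu (U `\` K) eps].

Definition lf_reg_borel_cmeasure (mu : set X -> R[i]) : Prop :=
  csigma_additive mu /\ cregular mu.

Definition vanishes_on (mu : set X -> R[i]) (S : set X) : Prop :=
  forall A, bborel D A -> A `<=` S -> mu A = 0.

(* c is the (well-defined) value of mu on the possibly unbounded set S,
   when mu is concentrated on a bounded Borel part A of S *)
Definition ext_val (mu : set X -> R[i]) (S : set X) (c : R[i]) : Prop :=
  exists A, [/\ bborel D A, A `<=` S, vanishes_on mu (S `\` A) & mu A = c].

Definition extv (mu : set X -> R[i]) (S : set X) : R[i] :=
  xget 0 [set c | ext_val mu S c].

End Measures.

Section Coarse.
Context {R : realType} {M : Type} (d : M -> M -> R).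

Definition dmax (n : nat) (x y : 'I_n.+1 -> M) : R :=
  \big[Num.max/0]_(i < n.+1) d (x i) (y i).

Definition multidiag (n : nat) : set ('I_n.+1 -> M) :=
  [set x | exists m : M, forall i, x i = m].

Definition Delta (n : nat) (r : R) : set ('I_n.+1 -> M) :=
  thick (dmax n) r (multidiag n).

Definition cpow (Y : set M) (n : nat) : set ('I_n.+1 -> M) :=
  [set x | forall i, Y (x i)].

Definition coarse_chain (n : nat) (mu : set ('I_n.+1 -> M) -> R[i]) : Prop :=
  lf_reg_borel_cmeasure (dmax n) mu /\
  exists r : R, vanishes_on (dmax n) mu (~` Delta n r).

Definition supported_on (n : nat) (Y : set M) (mu : set ('I_n.+1 -> M) -> R[i]) :=
  vanishes_on (dmax n) mu (~` cpow Y n).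

Definition CX (n : nat) (F : set (set M)) (mu : set ('I_n.+1 -> M) -> R[i]) :=
  coarse_chain n mu /\ exists2 Y, F Y & supported_on n Y mu.

Definition face (n : nat) (i : 'I_n.+2) (x : 'I_n.+2 -> M) : 'I_n.+1 -> M :=
  fun j => x (lift i j).

Definition bdry (n : nat) (mu : set ('I_n.+2 -> M) -> R[i])
  : set ('I_n.+1 -> M) -> R[i] :=
  fun B => \sum_(i < n.+2) (-1) ^+ i * extv (dmax n.+1) mu (face n i @^-1` B).

(* relative n-cycles of CX(A)/CX(B) (all chains are cycles in degree 0) *)
Definition rcycle (A B : set (set M)) (n : nat)
  : (set ('I_n.+1 -> M) -> R[i]) -> Prop :=
  match n with
  | 0 => fun mu => CX 0 A mu
  | m.+1 => fun mu => CX m.+1 A mu /\ CX m B (bdry m mu)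
  end.

Definition rbdry (A B : set (set M)) (n : nat) (mu : set ('I_n.+1 -> M) -> R[i]) :=
  exists2 nu, CX n.+1 A nu & CX n B (mu \- bdry n nu).

Definition big_family (F : set (set M)) : Prop :=
  [/\ F set0,
      (forall Y Y', F Y -> Y' `<=` Y -> F Y'),
      (forall Y Y', F Y -> F Y' -> F (Y `|` Y')) &
      (forall (r : R) Y, 0 <= r -> F Y -> F (thick d r Y))].

End Coarse.

Definition fcap {M : Type} (F G : set (set M)) : set (set M) :=
  [set S | exists X Y, [/\ F X, G Y & S = X `&` Y]].
Definition fcup {M : Type} (F G : set (set M)) : set (set M) :=
  [set S | exists X Y, [/\ F X, G Y & S = X `|` Y]].

(* Main.v *)
Require Import Defs.
From mathcomp Require Import all_boot all_order all_algebra.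
From mathcomp Require Import all_classical all_reals all_analysis.
From mathcomp Require Import complex.
From mathcomp Require Import ring lra.
Import Order.TTheory GRing.Theory Num.Theory numFieldNormedType.Exports.
Local Open Scope ring_scope.
Local Open Scope classical_set_scope.

Section Gen.
Context {R : realType} {T : Type} (D : T -> T -> R) (hD : is_metric D).

Lemma dge0 x y : 0 <= D x y. Proof. by case: hD. Qed.
Lemma dxx x : D x x = 0. Proof. by case: hD => _ h _ _; apply/h. Qed.
Lemma dsym x y : D x y = D y x. Proof. by case: hD. Qed.
Lemma dtri x y z : D x z <= D x y + D y z. Proof. by case: hD. Qed.

Lemma mopen_ball a r : dopen D [set y | D a y < r].
Proof.
move=> y /= hy; exists (r - D a y); first by rewrite subr_gt0.
move=> z /= hz; apply: (le_lt_trans (dtri a y z)).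
by rewrite -ltrBrDl.
Qed.

Lemma mopenI U V : dopen D U -> dopen D V -> dopen D (U `&` V).
Proof.
move=> hU hV x [Ux Vx].
have [e1 e10 s1] := hU x Ux; have [e2 e20 s2] := hV x Vx.
exists (Num.min e1 e2); first by rewrite lt_min e10 e20.
move=> y /= hy; split; [apply: s1|apply: s2] => /=;
  by apply: (lt_le_trans hy); rewrite ge_min lexx ?orbT.
Qed.

Lemma mopenU U V : dopen D U -> dopen D V -> dopen D (U `|` V).
Proof.
move=> hU hV x [Ux|Vx].
  by have [e e0 s] := hU x Ux; exists e => // y /s; left.
by have [e e0 s] := hV x Vx; exists e => // y /s; right.
Qed.

Lemma mopen0 : dopen D set0. Proof. by move=> x []. Qed.
Lemma mopenT : dopen D setT. Proof. by move=> x _; exists 1 => //. Qed.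

Lemma mborel_open U : dopen D U -> dborel D U.
Proof. by move=> hU; apply: sub_sigma_algebra. Qed.

Lemma mborelC A : dborel D A -> dborel D (~` A).
Proof. by move=> hA; rewrite -setTD; apply: sigma_algebraCD. Qed.

Lemma mborel_bigcup (F : nat -> set T) : (forall k, dborel D (F k)) ->
  dborel D (\bigcup_k F k).
Proof. exact: sigma_algebra_bigcup. Qed.

Lemma mborel0 : dborel D set0. Proof. exact: sigma_algebra0. Qed.
Lemma mborelT : dborel D setT.
Proof. by rewrite -setC0; apply: mborelC; exact: mborel0. Qed.

Lemma mborelU A B : dborel D A -> dborel D B -> dborel D (A `|` B).
Proof.
move=> hA hB.
have -> : A `|` B = \bigcup_k (if k is 0%N then A else B).
  apply/seteqP; split => x.
    by case=> h; [exists 0%N|exists 1%N].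
  by case=> -[|k] _ /= h; [left|right].
by apply: mborel_bigcup => -[|k].
Qed.

Lemma mborelI A B : dborel D A -> dborel D B -> dborel D (A `&` B).
Proof.
move=> hA hB; rewrite -(setCK (A `&` B)) setCI; apply: mborelC.
by apply: mborelU; apply: mborelC.
Qed.

Lemma mborelD A B : dborel D A -> dborel D B -> dborel D (A `\` B).
Proof. by move=> hA hB; rewrite setDE; apply: mborelI => //; apply: mborelC. Qed.

Lemma mborel_closed K : dclosed D K -> dborel D K.
Proof. by move=> hK; rewrite -(setCK K); apply: mborelC; apply: mborel_open. Qed.

Lemma mbounded_sub A B : A `<=` B -> dbounded D B -> dbounded D A.
Proof. by move=> sAB [r hr]; exists r => x y /sAB hx /sAB hy; apply: hr. Qed.

Lemma mbounded0 : dbounded D set0. Proof. by exists 0 => x y []. Qed.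

Lemma mboundedU A B : dbounded D A -> dbounded D B -> dbounded D (A `|` B).
Proof.
move=> [r1 h1] [r2 h2].
have [[a Aa]|nA] := pselect (exists a, A a); last first.
  apply: (@mbounded_sub _ B); last by exists r2.
  by move=> x [Ax|//]; case: nA; exists x.
have [[b Bb]|nB] := pselect (exists b, B b); last first.
  apply: (@mbounded_sub _ A); last by exists r1.
  by move=> x [//|Bx]; case: nB; exists x.
exists (r1 + r2 + D a b + D a b) => x y.
have ha := h1 _ _ Aa Aa; have hb := h2 _ _ Bb Bb.
have r10 : 0 <= r1 by apply: le_trans (dge0 a a) ha.
have r20 : 0 <= r2 by apply: le_trans (dge0 b b) hb.
have dab := dge0 a b.
case=> hx; case=> hy.
- by have := h1 _ _ hx hy; lra.
- have := dtri x a y; have := dtri a b y; have := h1 _ _ hx Aa; have := h2 _ _ Bb hy.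
  lra.
- have := dtri x b y; have := dtri b a y; rewrite (dsym b a).
  have := h2 _ _ hx Bb; have := h1 _ _ Aa hy. lra.
- by have := h2 _ _ hx hy; lra.
Qed.

Lemma mbounded_open A : dbounded D A ->
  exists U, [/\ dopen D U, dbounded D U & A `<=` U].
Proof.
move=> [r hr].
have [[a Aa]|nA] := pselect (exists a, A a); last first.
  exists set0; split; [exact: mopen0|exact: mbounded0|].
  by move=> x Ax; apply: nA; exists x.
exists [set y | D a y < r + 1]; split.
- exact: mopen_ball.
- exists ((r + 1) + (r + 1)) => x y /= hx hy.
  have := dtri x a y; rewrite (dsym x a); lra.
- move=> x /= Ax; have := hr _ _ Aa Ax; lra.
Qed.
End Gen.
Arguments dge0 {R T D} hD x y.
Arguments dxx {R T D} hD x.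
Arguments dsym {R T D} hD x y.
Arguments dtri {R T D} hD x y z.
Arguments mbounded_sub {R T D A B}.
Arguments mbounded_open {R T D} hD {A}.
Arguments mboundedU {R T D} hD {A B}.
Arguments mborel_closed {R T D K}.
Arguments mborelI {R T D A B}.
Arguments mborelD {R T D A B}.
Arguments mborelU {R T D A B}.
Arguments mborelC {R T D A}.
Arguments mborel_open {R T D U}.
Arguments mopenI {R T D U V}.
Arguments mopenU {R T D U V}.

Lemma finite_nat_bound (F : set nat) : finite_set F -> exists N, forall m, F m -> (m <= N)%N.
Proof.
move=> /finite_fsetP [B ->]; exists (\max_(m <- finmap.enum_fset B) m)%N => m /= mB.
by apply: (@leq_bigmax_seq _ (finmap.enum_fset B) xpredT id m).
Qed.

Section Gen2.
Context {R : realType} {T : Type} (D : T -> T -> R) (hD : is_metric D).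

Lemma mcompact0 : dcompact D set0.
Proof. by move=> I U _ _; exists set0; split => // x []. Qed.

Lemma mcompactU K1 K2 : dcompact D K1 -> dcompact D K2 -> dcompact D (K1 `|` K2).
Proof.
move=> h1 h2 I U oU cov.
have [F1 [fF1 c1]] := h1 I U oU (subset_trans (@subsetUl _ K1 K2) cov).
have [F2 [fF2 c2]] := h2 I U oU (subset_trans (@subsetUr _ K1 K2) cov).
exists (F1 `|` F2); split; first by rewrite finite_setU.
move=> x [/c1|/c2] [i Fi Ux]; exists i => //; [left|right] => //.
Qed.

Lemma mcompact_closed K : dcompact D K -> dclosed D K.
Proof.
move=> hK x nKx.
pose U (m : nat) := [set y | (m.+1%:R)^-1 < D x y].
have oU m : dopen D (U m).
  move=> y /= hy; exists (D x y - (m.+1%:R)^-1); first by rewrite subr_gt0.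
  move=> z /= hz; rewrite /U /=; have := dtri hD x z y; rewrite (dsym hD y z) in hz.
  move=> tri; set c := (m.+1%:R)^-1 in hz *; lra.
have cov : K `<=` \bigcup_(m in [set: nat]) U m.
  move=> y Ky; have xy : x <> y by move=> exy; apply: nKx; rewrite exy.
  have dpos : 0 < D x y.
    rewrite lt_def (dge0 hD) andbT; apply/eqP => h.
    by apply: xy; case: hD => _ hh _ _; apply/hh.
  exists (Num.Def.trunc ((D x y)^-1)) => //=.
  rewrite /U /= invf_plt ?posrE ?ltr0n //; exact: truncnS_gt.
have [F [fF cF]] := hK nat U oU cov.
have [N hN] := finite_nat_bound _ fF.
exists (N.+1%:R)^-1; first by rewrite invr_gt0 ltr0n.
move=> y /= hy Ky; have [m Fm] := cF y Ky; rewrite /U /=.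
apply/negP; rewrite -leNgt; apply: (le_trans (ltW hy)).
rewrite lef_pV2 ?posrE ?ltr0n // ler_nat; exact: hN.
Qed.

End Gen2.

Section Lip.
Context {R : realType} {T1 T2 : Type} (D1 : T1 -> T1 -> R) (D2 : T2 -> T2 -> R)
  (f : T1 -> T2) (hf : forall x y, D2 (f x) (f y) <= D1 x y).

Lemma lip_open U : dopen D2 U -> dopen D1 (f @^-1` U).
Proof.
move=> hU x /= Ufx; have [e e0 s] := hU _ Ufx; exists e => // y /= hy.
by apply: s => /=; apply: le_lt_trans (hf x y) hy.
Qed.

Lemma lip_borel B : dborel D2 B -> dborel D1 (f @^-1` B).
Proof.
move=> hB; apply: (hB [set B | dborel D1 (f @^-1` B)]); split.
- split => /=.
  + by rewrite preimage_set0; exact: mborel0.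
  + move=> A hA; rewrite setTD -preimage_setC; exact: mborelC.
  + by move=> F hF; rewrite preimage_bigcup; apply: mborel_bigcup.
- by move=> U /= hU; apply: mborel_open; exact: lip_open.
Qed.

Lemma lip_compact K : dcompact D1 K -> dcompact D2 (f @` K).
Proof.
move=> hK I U oU cov.
have [F [fF cF]] := hK I (fun i => f @^-1` U i) (fun i => @lip_open (U i) (oU i))
  (fun x Kx => cov (f x) (ex_intro2 _ _ x Kx erefl)).
exists F; split => // _ [x Kx <-]; exact: cF.
Qed.

End Lip.

Section Thick.
Context {R : realType} {T : Type} (D : T -> T -> R) (hD : is_metric D).

Lemma mthick_closed r Y : dclosed D (thick D r Y).
Proof.
move=> x nx.
have [[e [e0 he]]|ne] :=
  pselect (exists e, 0 < e /\ forall y, Y y -> r + e <= D x y); last first.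
  exfalso; apply: nx => e e0.
  have [//|nh] := pselect (exists2 y, Y y & D x y < r + e).
  exfalso; apply: ne; exists e; split => // y Yy; rewrite leNgt; apply/negP => h.
  by apply: nh; exists y.
exists (e / 2); first by rewrite divr_gt0.
move=> z /= hz tz; have [|y Yy hy] := tz (e / 2); first by rewrite divr_gt0.
have := he y Yy; have := dtri hD x z y; lra.
Qed.

Lemma thick_mono r1 r2 Y : r1 <= r2 -> thick D r1 Y `<=` thick D r2 Y.
Proof.
move=> hr x hx e e0; have [y Yy hy] := hx e e0; exists y => //; lra.
Qed.

Lemma thick_sub r Y : 0 <= r -> Y `<=` thick D r Y.
Proof. by move=> r0 y Yy e e0; exists y => //; rewrite (dxx hD); lra. Qed.

End Thick.

Section Prod.
Context {R : realType} {M : Type} (d : M -> M -> R) (hd : is_metric d).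

Lemma dmax_ge {n} (x y : 'I_n.+1 -> M) i : d (x i) (y i) <= dmax d n x y.
Proof. exact: (le_bigmax _ (fun i => d (x i) (y i))). Qed.

Lemma dmax_le {n} (x y : 'I_n.+1 -> M) c : 0 <= c ->
  (forall i, d (x i) (y i) <= c) -> dmax d n x y <= c.
Proof. by move=> c0 h; apply: bigmax_le. Qed.

Lemma dmax_metric n : is_metric (dmax d n).
Proof.
split.
- move=> x y; exact: le_trans (dge0 hd (x ord0) (y ord0)) (dmax_ge x y ord0).
- move=> x y; split => [h|->].
    apply: funext => i; have := dmax_ge x y i; rewrite h => h1.
    case: hd => h0 hh _ _; apply/hh; apply/eqP; rewrite eq_le h1 h0 //.
  apply/eqP; rewrite eq_le; apply/andP; split.
    by apply: dmax_le => // i; rewrite (dxx hd).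
  apply: le_trans _ (dmax_ge y y ord0); by rewrite (dxx hd).
- move=> x y; apply/eqP; rewrite eq_le; apply/andP; split; apply: dmax_le;
  try (apply: le_trans _ (dmax_ge _ _ ord0); exact: (dge0 hd _ _));
  by move=> i; rewrite (dsym hd); apply: dmax_ge.
- move=> x y z; apply: dmax_le.
    apply: addr_ge0; (apply: le_trans _ (dmax_ge _ _ ord0); exact: (dge0 hd)).
  move=> i; apply: le_trans (dtri hd _ (y i) _) _.
  by apply: lerD; apply: dmax_ge.
Qed.

Lemma face_lip n (i : 'I_n.+2) x y :
  dmax d n (face n i x) (face n i y) <= dmax d n.+1 x y.
Proof.
apply: dmax_le; first by apply: le_trans _ (dmax_ge _ _ ord0); exact: (dge0 hd).
move=> j; rewrite /face; exact: dmax_ge.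
Qed.

Lemma cpow_closed n Y : dclosed d Y -> dclosed (dmax d n) (cpow Y n).
Proof.
move=> hY x nx.
have [[i ni]|ne] := pselect (exists i, ~ Y (x i)); last first.
  by exfalso; apply: nx => i; have [//|h] := pselect (Y (x i)); case: ne; exists i.
have [e e0 s] := hY _ ni; exists e => // z /= hz cz.
by apply: (s (z i)) => //=; apply: le_lt_trans (dmax_ge x z i) hz.
Qed.

Lemma Delta_closed n r : dclosed (dmax d n) (Delta d n r).
Proof. exact: (mthick_closed _ (dmax_metric n)). Qed.

Lemma face_Delta n r (i : 'I_n.+2) x : Delta d n.+1 r x -> Delta d n r (face n i x).
Proof.
move=> hx e e0; have [y [m hm] hy] := hx e e0.
exists (face n i y); first by exists m => j; rewrite /face hm.
by apply: le_lt_trans (face_lip _ i x y) hy.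
Qed.

Lemma face_cpow n (Y : set M) (i : 'I_n.+2) x : cpow Y n.+1 x -> cpow Y n (face n i x).
Proof. by move=> h j; apply: h. Qed.

Lemma Delta_pair {n r} {x : 'I_n.+1 -> M} i j : Delta d n r x ->
  forall e, 0 < e -> d (x i) (x j) < 2 * r + 2 * e.
Proof.
move=> hx e e0; have [y [m hm] hy] := hx e e0.
have h1 := le_lt_trans (dmax_ge x y i) hy.
have h2 := le_lt_trans (dmax_ge x y j) hy.
rewrite !hm in h1 h2; rewrite (dsym hd (x j) m) in h2.
have := dtri hd (x i) m (x j); lra.
Qed.

Lemma face_bounded n r (i : 'I_n.+2) B : dbounded (dmax d n) B ->
  dbounded (dmax d n.+1) (face n i @^-1` B `&` Delta d n.+1 r).
Proof.
move=> [b hb]; exists (4 * r + 4 + b) => x y [Bx Dx] [By Dy].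
have hxy := hb _ _ Bx By.
pose j0 := lift i ord0.
have hj : forall k, d (x k) (y k) <= 4 * r + 4 + b.
  move=> k.
  have h1 := Delta_pair k j0 Dx 1 ltr01.
  have h2 := Delta_pair j0 k Dy 1 ltr01.
  have h3 : d (x j0) (y j0) <= b.
    by apply: le_trans _ hxy; exact: (dmax_ge (face n i x) (face n i y) ord0).
  have := dtri hd (x k) (x j0) (y k); have := dtri hd (x j0) (y j0) (y k); lra.
apply: dmax_le => //; apply: le_trans _ (hj ord0); exact: (dge0 hd).
Qed.

Lemma Delta_mono n r1 r2 : r1 <= r2 -> Delta d n r1 `<=` Delta d n r2.
Proof. exact: thick_mono. Qed.

End Prod.

Lemma lim_uniq {R : realType} {u : nat -> R} {a b : R} :
  u N @[N --> \oo] --> a -> u N @[N --> \oo] --> b -> a = b.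
Proof. move=> ha hb; exact: (cvg_unique _ ha hb). Qed.

Lemma evc {R : realType} {u : nat -> R} {a : R} m :
  (forall N, (m <= N)%N -> u N = a) -> u N @[N --> \oo] --> a.
Proof. move=> h; apply: cvg_near_cst; exists m => // N /= hN; exact: h. Qed.

Lemma sum_tail {V : zmodType} (f : nat -> V) m N : (m <= N)%N ->
  (forall k, (m <= k)%N -> f k = 0) -> \sum_(k < N) f k = \sum_(k < m) f k.
Proof.
move=> hmN h; rewrite -!(big_mkord xpredT f) (@big_cat_nat _ _ _ m 0 N _ _ (leq0n m) hmN) /=.
rewrite [X in _ + X](_ : _ = 0) ?addr0 //.
rewrite big_nat_cond big1 // => k /andP[/andP[hk _] _]; exact: h.
Qed.

Section Cplx.
Context {R : realType}.
Implicit Types a b z : R[i].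
Local Open Scope complex_scope.

Lemma cext a b : complex.Re a = complex.Re b -> complex.Im a = complex.Im b -> a = b.
Proof. by case: a; case: b => /= ? ? ? ? -> ->. Qed.

Lemma ReD a b : complex.Re (a + b) = complex.Re a + complex.Re b.
Proof. by case: a; case: b. Qed.
Lemma ImD a b : complex.Im (a + b) = complex.Im a + complex.Im b.
Proof. by case: a; case: b. Qed.
Lemma ReN a : complex.Re (- a) = - complex.Re a. Proof. by case: a. Qed.
Lemma ImN a : complex.Im (- a) = - complex.Im a. Proof. by case: a. Qed.
Lemma Re0 : complex.Re (0 : R[i]) = 0. Proof. by []. Qed.
Lemma Im0 : complex.Im (0 : R[i]) = 0. Proof. by []. Qed.

Lemma Re_sum (I : Type) (r : seq I) (P : pred I) (f : I -> R[i]) :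
  complex.Re (\sum_(i <- r | P i) f i) = \sum_(i <- r | P i) complex.Re (f i).
Proof. exact: (big_morph _ ReD Re0). Qed.
Lemma Im_sum (I : Type) (r : seq I) (P : pred I) (f : I -> R[i]) :
  complex.Im (\sum_(i <- r | P i) f i) = \sum_(i <- r | P i) complex.Im (f i).
Proof. exact: (big_morph _ ImD Im0). Qed.

Lemma cabsC z : (cabs z)%:C = `|z|.
Proof. by rewrite normc_def. Qed.

Lemma cabs_ge0 z : 0 <= cabs z.
Proof. exact: sqrtr_ge0. Qed.

Lemma cabsD a b : cabs (a + b) <= cabs a + cabs b.
Proof.
rewrite -lecR rmorphD /= !cabsC; exact: ler_normD.
Qed.

Lemma cabsN z : cabs (- z) = cabs z.
Proof. by apply: complexI; rewrite !cabsC normrN. Qed.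

Lemma cabs_sign (i : nat) z : cabs ((-1) ^+ i * z) = cabs z.
Proof. by rewrite -signr_odd; case: (odd i); rewrite ?expr1 ?expr0 ?mulN1r ?mul1r ?cabsN. Qed.

End Cplx.

Lemma trivIset_sub {T1 T2 : Type} (f : T1 -> T2) {F : nat -> set T2} {G : nat -> set T1} :
  trivIset setT F -> (forall k, G k `<=` f @^-1` F k) -> trivIset setT G.
Proof.
move=> hF hG i j _ _ [x [Gi Gj]]; apply: hF => //.
by exists (f x); split; [apply: hG Gi|apply: hG Gj].
Qed.

Section Meas.
Context {R : realType} {T : Type} (D : T -> T -> R) (hD : is_metric D).
Local Notation LF := (lf_reg_borel_cmeasure D).

Lemma lf0 {mu} : LF mu -> mu set0 = 0.
Proof.
move=> [hs _].
have hb : dbounded D (\bigcup_(k : nat) (@set0 T)) by rewrite bigcup0 //; exact: mbounded0.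
have ht : trivIset setT (fun _ : nat => @set0 T) by move=> i j _ _ [x []].
have [hRe hIm] := hs (fun _ => set0) (fun _ => mborel0 D) ht hb.
rewrite bigcup0 // in hRe hIm.
have key (c : R) : (\sum_(k < N) c) @[N --> \oo] --> c -> c = 0.
  have e : (fun N => \sum_(k < N) c) = (fun N => c *+ N).
    by apply: funext => N; rewrite sumr_const card_ord.
  rewrite e => h1.
  have h2 := h1; rewrite -cvg_shiftS in h2.
  have h3 := cvgB h2 h1.
  have h4 : (fun _ : nat => c) @ \oo --> c - c.
    have e2 : (fun _ : nat => c) = (fun N : nat => c *+ N.+1) - (fun N => c *+ N).
      by apply: funext => N; rewrite !fctE /= mulrSr addrAC subrr add0r.
    rewrite e2; exact: h3.
  have h5 := lim_uniq (cvg_cst c) h4.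
  by rewrite subrr in h5; apply: h5; exact: _.
apply: cext; [exact: key|exact: key].
Qed.

Lemma cvg_ext {u v : nat -> R} {a : R} : (forall N, u N = v N) ->
  u N @[N --> \oo] --> a -> v N @[N --> \oo] --> a.
Proof. by move=> e; have -> : v = u by apply: funext => N; rewrite e. Qed.

Lemma lf_fin {mu} {F : nat -> set T} {m} : LF mu -> (forall k, dborel D (F k)) ->
  trivIset setT F -> dbounded D (\bigcup_k F k) ->
  (forall k, (m <= k)%N -> F k = set0) ->
  mu (\bigcup_k F k) = \sum_(k < m) mu (F k).
Proof.
move=> hmu hF ht hb hz; have mu0 := lf0 hmu; case: hmu => [hs _].
have [hRe hIm] := hs F hF ht hb.
apply: cext.
- apply: (lim_uniq hRe); rewrite Re_sum; apply: (evc m) => N hN.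
  rewrite (sum_tail (fun k => complex.Re (mu (F k))) _ _ hN) // => k hk.
  by rewrite hz // mu0.
- apply: (lim_uniq hIm); rewrite Im_sum; apply: (evc m) => N hN.
  rewrite (sum_tail (fun k => complex.Im (mu (F k))) _ _ hN) // => k hk.
  by rewrite hz // mu0.
Qed.

Definition two (A B : set T) (k : nat) : set T :=
  match k with 0 => A | 1 => B | _ => set0 end.

Lemma two_cup A B : \bigcup_k two A B k = A `|` B.
Proof.
apply/seteqP; split => x.
  by case=> -[|[|k]] _ /= h; [left|right|].
by case=> h; [exists 0%N|exists 1%N].
Qed.

Lemma lf_add2 {mu A B} : LF mu -> bborel D A -> bborel D B -> A `&` B = set0 ->
  mu (A `|` B) = mu A + mu B.
Proof.
move=> hmu [bA bA'] [bB bB'] AB.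
rewrite -two_cup (lf_fin (m := 2) hmu).
- by rewrite big_ord_recr big_ord1 /=.
- move=> [|[|k]] /=; [exact: bA|exact: bB|exact: mborel0].
- move=> [|[|i]] [|[|j]] _ _ /= [x [h1 h2]] //.
  + by have : (A `&` B) x by []; rewrite AB.
  + by have : (A `&` B) x by []; rewrite AB.
- by rewrite two_cup; apply: (mboundedU hD).
- by move=> [|[|k]].
Qed.

Lemma lf_split {mu A B} : LF mu -> bborel D A -> dborel D B ->
  mu A = mu (A `&` B) + mu (A `\` B).
Proof.
move=> hmu [bA bA'] bB.
rewrite -{1}(setUIDK A B) lf_add2 //.
- split; [exact: mborelI|exact: (mbounded_sub (fun x (h : (_ `&` _) x) => proj1 h) bA')].
- split; [exact: mborelD|exact: (mbounded_sub (fun x (h : (_ `\` _) x) => proj1 h) bA')].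
- by apply/seteqP; split => x // [[_ h1] [_ h2]].
Qed.

Lemma ext_val_uniq {mu S c1 c2} : LF mu -> ext_val D mu S c1 -> ext_val D mu S c2 ->
  c1 = c2.
Proof.
move=> hmu [A1 [hA1 sA1 v1 <-]] [A2 [hA2 sA2 v2 <-]].
rewrite (lf_split hmu hA1 hA2.1) (lf_split hmu hA2 hA1.1) setIC.
have z1 : mu (A1 `\` A2) = 0.
  apply: v2; last by move=> x [/sA1 ? ?].
  split; [exact: mborelD hA1.1 hA2.1|exact: (mbounded_sub (fun x (h : (_ `\` _) x) => proj1 h) hA1.2)].
have z2 : mu (A2 `\` A1) = 0.
  apply: v1; last by move=> x [/sA2 ? ?].
  split; [exact: mborelD hA2.1 hA1.1|exact: (mbounded_sub (fun x (h : (_ `\` _) x) => proj1 h) hA2.2)].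
by rewrite z1 z2.
Qed.

Lemma extv_eq {mu S c} : LF mu -> ext_val D mu S c -> extv D mu S = c.
Proof.
move=> hmu hc; rewrite /extv; apply: xget_unique => // y hy.
exact: ext_val_uniq hy hc.
Qed.

Definition agree (mu nu : set T -> R[i]) := forall A, bborel D A -> mu A = nu A.

Lemma lf_agree mu nu : agree mu nu -> LF mu -> LF nu.
Proof.
move=> e [hs hr]; split.
- move=> F hF ht hb; have [h1 h2] := hs F hF ht hb.
  have eF k : mu (F k) = nu (F k).
    apply: e; split => //; apply: (mbounded_sub _ hb).
    by move=> x Fx; exists k.
  have eU : mu (\bigcup_k F k) = nu (\bigcup_k F k).
    by apply: e; split => //; exact: mborel_bigcup.
  rewrite -eU; split; [apply: (cvg_ext _ h1)|apply: (cvg_ext _ h2)] => N;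
    by apply: eq_bigr => k _; rewrite eF.
- move=> A hA eps eps0; have [K [U [hK hU bU [sK sU] hv]]] := hr A hA eps eps0.
  exists K, U; split => // F hF ht N.
  have := hv F hF ht N; rewrite (eq_bigr (fun k : 'I_N => cabs (nu (F k)))) //.
  move=> k _; rewrite e //; split; first exact: (hF k).1.
  by apply: (mbounded_sub _ bU) => x /(hF k).2 [].
Qed.

Lemma vanish_agree mu nu S : agree mu nu -> vanishes_on D mu S -> vanishes_on D nu S.
Proof. by move=> e h A hA sA; rewrite -e // h. Qed.

Lemma lf_zero : LF (fun _ => 0).
Proof.
split.
- move=> F hF ht hb; split; apply: (cvg_ext _ (cvg_cst 0)) => N;
    by rewrite big1.
- move=> A [_ hA] eps eps0; have [U [oU bU sU]] := mbounded_open hD hA.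
  exists set0, U; split => //; [exact: mcompact0|by split|].

  move=> F _ _ N; rewrite big1 ?ltW // => k _.
  by rewrite /cabs /= expr0n /= addr0 sqrtr0.
Qed.

Lemma bborel_sub A B : dborel D A -> A `<=` B -> dbounded D B -> bborel D A.
Proof. by move=> hA sAB hB; split => //; exact: mbounded_sub sAB hB. Qed.

Lemma lf_add {mu nu} : LF mu -> LF nu -> LF (mu \+ nu).
Proof.
move=> [hs1 hr1] [hs2 hr2]; split.
- move=> F hF ht hb; have [a1 a2] := hs1 F hF ht hb; have [b1 b2] := hs2 F hF ht hb.
  split.
  + rewrite /= ReD; apply: (cvg_ext _ (cvgD a1 b1)) => N.
    by rewrite -big_split; apply: eq_bigr => k _; rewrite ReD.
  + rewrite /= ImD; apply: (cvg_ext _ (cvgD a2 b2)) => N.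
    by rewrite -big_split; apply: eq_bigr => k _; rewrite ImD.
- move=> A hA eps e0; have e2 : 0 < eps / 2 by rewrite divr_gt0.
  have [K1 [U1 [hK1 oU1 bU1 [sK1 sU1] hv1]]] := hr1 A hA _ e2.
  have [K2 [U2 [hK2 oU2 bU2 [sK2 sU2] hv2]]] := hr2 A hA _ e2.
  exists (K1 `|` K2), (U1 `&` U2); split.
  + exact: mcompactU.
  + exact: mopenI.
  + exact: mbounded_sub (fun x (h : (_ `&` _) x) => proj1 h) bU1.
  + split; first by move=> x [/sK1|/sK2].
    by move=> x Ax; split; [apply: sU1|apply: sU2].
  + move=> F hF ht N.
    have h1 := hv1 F (fun k => conj (hF k).1
      (fun x Fx => match (hF k).2 x Fx with conj (conj u _) nk => conj u (fun q => nk (or_introl q)) end)) ht N.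
    have h2 := hv2 F (fun k => conj (hF k).1
      (fun x Fx => match (hF k).2 x Fx with conj (conj _ u) nk => conj u (fun q => nk (or_intror q)) end)) ht N.
    apply: le_trans (ler_sum _ (fun k _ => cabsD _ _)) _.
    rewrite big_split /=; lra.
Qed.

Lemma lf_opp {mu} : LF mu -> LF (\- mu).
Proof.
move=> [hs hr]; split.
- move=> F hF ht hb; have [a1 a2] := hs F hF ht hb.
  split.
  + rewrite /= ReN; apply: (cvg_ext _ (cvgN a1)) => N.
    by rewrite -sumrN; apply: eq_bigr => k _; rewrite ReN.
  + rewrite /= ImN; apply: (cvg_ext _ (cvgN a2)) => N.
    by rewrite -sumrN; apply: eq_bigr => k _; rewrite ImN.
- move=> A hA eps e0; have [K [U [hK oU bU sKU hv]]] := hr A hA _ e0.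
  exists K, U; split => // F hF ht N.
  rewrite (eq_bigr (fun k : 'I_N => cabs (mu (F k)))); [exact: hv|move=> k _; exact: cabsN].
Qed.

Lemma lf_sub {mu nu} : LF mu -> LF nu -> LF (mu \- nu).
Proof. by move=> h1 h2; apply: (lf_agree _ _ _ (lf_add h1 (lf_opp h2))) => A _. Qed.

Lemma lf_res {mu} {C : set T} : LF mu -> dclosed D C -> LF (fun A => mu (A `&` C)).
Proof.
move=> [hs hr] hC; have bC := mborel_closed hC; split.
- move=> F hF ht hb.
  have := hs (fun k => F k `&` C) (fun k => mborelI (hF k) bC)
    (trivIset_sub id ht (fun k x h => proj1 h)).
  rewrite -setI_bigcupl; apply.
  exact: mbounded_sub (fun x (h : (_ `&` _) x) => proj1 h) hb.
- move=> A [bA1 bA2] eps e0.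
  have [|K [U [hK oU bU [sK sU] hv]]] := hr (A `&` C) _ _ e0.
    by apply: bborel_sub (fun x (h : (_ `&` _) x) => proj1 h) bA2; exact: mborelI.
  have [Bo [oBo bBo sBo]] := mbounded_open hD bA2.
  exists K, (U `|` (Bo `&` ~` C)); split => //.
  + apply: mopenU oU (mopenI oBo hC).
  + apply: (mboundedU hD bU); exact: mbounded_sub (fun x (h : (_ `&` _) x) => proj1 h) bBo.
  + split; first by move=> x /sK [].
    move=> x Ax; have [Cx|nCx] := pselect (C x); first by left; apply: sU.
    by right; split => //; apply: sBo.
  + move=> F hF ht N.
    apply: (hv (fun k => F k `&` C)) => [k|]; last exact: (trivIset_sub id ht (fun k x h => proj1 h)).
    split; first exact: mborelI (hF k).1 bC.
    move=> x [Fx Cx]; have [[hU|[_ nC]] nK] := (hF k).2 x Fx => //.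
Qed.

Lemma vanish_sub {mu} S S' : S' `<=` S -> vanishes_on D mu S -> vanishes_on D mu S'.
Proof. by move=> sS h A hA sA; apply: h => // x /sA /sS. Qed.

Lemma vanish_add {mu nu} S : vanishes_on D mu S -> vanishes_on D nu S ->
  vanishes_on D (mu \+ nu) S.
Proof. by move=> h1 h2 A hA sA; rewrite /= h1 // h2 // addr0. Qed.

Lemma vanish_opp {mu} S : vanishes_on D mu S -> vanishes_on D (\- mu) S.
Proof. by move=> h A hA sA; rewrite /= h // oppr0. Qed.

Lemma vanish_subf {mu nu} S : vanishes_on D mu S -> vanishes_on D nu S ->
  vanishes_on D (mu \- nu) S.
Proof. by move=> h1 h2 A hA sA; rewrite /= h1 // h2 // subrr. Qed.

Lemma vanish_res {mu} {C : set T} S : dborel D C -> vanishes_on D mu S ->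
  vanishes_on D (fun A => mu (A `&` C)) S.
Proof.
move=> bC h A [bA1 bA2] sA; apply: h => [|x [/sA //]].
apply: bborel_sub (fun x (h : (_ `&` _) x) => proj1 h) bA2.
exact: mborelI bA1 bC.
Qed.

Lemma vanish_resC {mu} {C : set T} : LF mu ->
  vanishes_on D (fun A => mu (A `&` C)) (~` C).
Proof.
move=> hmu A _ sA; rewrite (_ : A `&` C = set0) ?(lf0 hmu) //.
by apply/seteqP; split => x // [/sA].
Qed.


Lemma vanishU {mu} S1 S2 : LF mu -> dborel D S1 -> vanishes_on D mu S1 ->
  vanishes_on D mu S2 -> vanishes_on D mu (S1 `|` S2).
Proof.
move=> hmu b1 h1 h2 A hA sA; rewrite (lf_split hmu hA b1).
have -> : mu (A `&` S1) = 0.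
  apply: h1; last by move=> x [].
  apply: bborel_sub (fun x (h : (_ `&` _) x) => proj1 h) hA.2.
  exact: mborelI hA.1 b1.
have -> : mu (A `\` S1) = 0.
  apply: h2; last by move=> x [/sA [] // ? ?].
  apply: bborel_sub (fun x (h : (_ `\` _) x) => proj1 h) hA.2.
  exact: mborelD hA.1 b1.
by rewrite addr0.
Qed.
End Meas.

Section Push.
Context {R : realType} {T1 T2 : Type} (D1 : T1 -> T1 -> R) (D2 : T2 -> T2 -> R)
  (hD1 : is_metric D1) (hD2 : is_metric D2)
  (f : T1 -> T2) (hf : forall x y, D2 (f x) (f y) <= D1 x y)
  (Dl : set T1) (hDl : dclosed D1 Dl)
  (hb : forall B, dbounded D2 B -> dbounded D1 (f @^-1` B `&` Dl)).

Definition pf (mu : set T1 -> R[i]) (B : set T2) := mu (f @^-1` B `&` Dl).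

Lemma pf_bborel {B} : bborel D2 B -> bborel D1 (f @^-1` B `&` Dl).
Proof.
move=> [b1 b2]; split; last exact: hb.
apply: mborelI; [exact: lip_borel hf _ b1|exact: mborel_closed hDl].
Qed.

Lemma lf_pf mu : lf_reg_borel_cmeasure D1 mu -> lf_reg_borel_cmeasure D2 (pf mu).
Proof.
move=> hmu; have [hs hr] := hmu; split.
- move=> F hF ht hbF.
  have := hs (fun k => f @^-1` F k `&` Dl)
    (fun k => (pf_bborel (conj (hF k) (mbounded_sub (fun x Fx => ex_intro2 _ _ k I Fx) hbF))).1)
    (trivIset_sub f ht (fun k x h => proj1 h)).
  by rewrite /pf preimage_bigcup setI_bigcupl; apply; rewrite -setI_bigcupl -preimage_bigcup; exact: hb.
- move=> A hA eps e0; have e2 : 0 < eps / 2 by rewrite divr_gt0.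
  have hP := pf_bborel hA.
  have [K [U [hK oU bU [sK sU] hv]]] := hr _ hP _ e2.
  have [Bo [oBo bBo sBo]] := mbounded_open hD2 hA.2.
  have hBA : bborel D2 (Bo `\` A).
    split; first exact: mborelD (mborel_open oBo) hA.1.
    exact: mbounded_sub (fun x (h : (_ `\` _) x) => proj1 h) bBo.
  have hQ := pf_bborel hBA.
  have [K2 [U2 [hK2 oU2 bU2 [sK2 sU2] hv2]]] := hr _ hQ _ e2.
  have cK2 := lip_compact _ _ _ hf _ hK2.
  exists (f @` K), (Bo `&` ~` (f @` K2)); split.
  + exact: (lip_compact _ _ _ hf _ hK).
  + exact: mopenI oBo (mcompact_closed _ hD2 _ cK2).
  + exact: mbounded_sub (fun x (h : (_ `&` _) x) => proj1 h) bBo.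
  + split; first by move=> _ [x /sK [hx _] <-].
    move=> a Aa; split; first exact: sBo.
    by move=> [x /sK2 [[_ nA] _] fx]; apply: nA; rewrite fx.
  + move=> F hF ht N.
    have bF k : bborel D2 (F k).
      split; first exact: (hF k).1.
      by apply: mbounded_sub bBo => x /(hF k).2 [[]].
    have bA1 : dborel D1 (f @^-1` A) := lip_borel _ _ _ hf _ hA.1.
    pose G1 k := (f @^-1` F k `&` Dl) `&` f @^-1` A.
    pose G2 k := (f @^-1` F k `&` Dl) `\` f @^-1` A.
    have e j : pf mu (F j) = mu (G1 j) + mu (G2 j).
      exact: (lf_split _ hD1 hmu (pf_bborel (bF j)) bA1).
    have h1 : \sum_(k < N) cabs (mu (G1 k)) <= eps / 2.
      apply: hv; last by apply: (trivIset_sub f ht) => k x [[]].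
      move=> k; split; first exact: mborelI (pf_bborel (bF k)).1 bA1.
      move=> x [[Fx Dx] Ax]; split; first exact: sU.
      move=> Kx; have [_ nK] := (hF k).2 _ Fx; apply: nK; exists x => //.
    have h2 : \sum_(k < N) cabs (mu (G2 k)) <= eps / 2.
      apply: hv2; last by apply: (trivIset_sub f ht) => k x [[]].
      move=> k; split; first exact: mborelD (pf_bborel (bF k)).1 bA1.
      move=> x [[Fx Dx] nAx]; have [[Box nK2] _] := (hF k).2 _ Fx.
      split; first by apply: sU2; split.
      by move=> K2x; apply: nK2; exists x.
    have hs2 : \sum_(k < N) cabs (pf mu (F k)) <=
        \sum_(k < N) (cabs (mu (G1 k)) + cabs (mu (G2 k))).
      by apply: ler_sum => k _; rewrite e; exact: cabsD.
    apply: le_trans hs2 _; rewrite big_split /=; lra.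
Qed.

Lemma pf_extv mu B : lf_reg_borel_cmeasure D1 mu -> vanishes_on D1 mu (~` Dl) ->
  bborel D2 B -> extv D1 mu (f @^-1` B) = pf mu B.
Proof.
move=> hmu hv hB; apply: (extv_eq _ hD1 hmu).
exists (f @^-1` B `&` Dl); split.
- exact: pf_bborel.
- by move=> x [].
- by apply: vanish_sub hv => x [Bx nx] Dx; apply: nx.
- by [].
Qed.

Lemma pf_vanish mu S S' : vanishes_on D1 mu S' ->
  (forall x, Dl x -> S (f x) -> S' x) -> vanishes_on D2 (pf mu) S.
Proof.
move=> hv h A hA sA; apply: hv; first exact: pf_bborel.
by move=> x [Ax Dx]; apply: h => //; apply: sA.
Qed.

End Push.

Section Coarse2.
Context {R : realType} {M : Type} (d : M -> M -> R) (hd : is_metric d).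
Local Notation hm n := (dmax_metric d hd n).
Local Notation LF n := (lf_reg_borel_cmeasure (dmax d n)).

Definition bpf n r (mu : set ('I_n.+2 -> M) -> R[i]) (B : set ('I_n.+1 -> M)) :=
  \sum_(i < n.+2) (-1) ^+ i * pf (face n i) (Delta d n.+1 r) mu B.

Lemma bdry_eq {n r mu B} : LF n.+1 mu ->
  vanishes_on (dmax d n.+1) mu (~` Delta d n.+1 r) -> bborel (dmax d n) B ->
  bdry d n mu B = bpf n r mu B.
Proof.
move=> hmu hv hB; rewrite /bdry /bpf; apply: eq_bigr => i _; congr (_ * _).
exact: (pf_extv _ _ (hm n.+1) _ (face_lip d hd n i) _ (Delta_closed d hd n.+1 r)
  (face_bounded d hd n r i) mu B hmu hv hB).
Qed.

Lemma lf_sign {n} k {mu : set ('I_n.+1 -> M) -> R[i]} : LF n mu ->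
  LF n (fun B => (-1) ^+ k * mu B).
Proof.
move=> hmu; rewrite -signr_odd; case: (odd k).
  by apply: (lf_agree _ _ _ _ (lf_opp _ hmu)) => A _ /=; rewrite expr1 mulN1r.
by apply: (lf_agree _ _ _ _ hmu) => A _ /=; rewrite expr0 mul1r.
Qed.

Lemma lf_bigsum n (I : Type) (s : seq I) (g : I -> set ('I_n.+1 -> M) -> R[i]) :
  (forall i, LF n (g i)) -> LF n (fun B => \sum_(i <- s) g i B).
Proof.
move=> hg; elim: s => [|a s IH].
  by apply: (lf_agree _ _ _ _ (lf_zero _ (hm n))) => A _ /=; rewrite big_nil.
by apply: (lf_agree _ _ _ _ (lf_add _ (hg a) IH)) => A _ /=; rewrite big_cons.
Qed.

Lemma lf_bpf {n} r {mu} : LF n.+1 mu -> LF n (bpf n r mu).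
Proof.
move=> hmu; rewrite /bpf.
have := @lf_bigsum n _ (index_enum 'I_n.+2) (fun i B => (-1) ^+ i * pf (face n i) (Delta d n.+1 r) mu B).
move=> h; apply: (lf_agree _ _ _ _ (h _)) => [B _ //|i].
apply: lf_sign.
exact: (lf_pf _ _ (hm n.+1) (hm n) _ (face_lip d hd n i) _ (Delta_closed d hd n.+1 r)
  (face_bounded d hd n r i) mu hmu).
Qed.

Lemma lf_bdry {n r mu} : LF n.+1 mu ->
  vanishes_on (dmax d n.+1) mu (~` Delta d n.+1 r) -> LF n (bdry d n mu).
Proof.
move=> hmu hv; apply: (lf_agree _ _ _ _ (lf_bpf r hmu)) => B hB.
by rewrite (bdry_eq hmu hv hB).
Qed.

Lemma bdry_vanish {n r mu S S'} : LF n.+1 mu ->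
  vanishes_on (dmax d n.+1) mu (~` Delta d n.+1 r) ->
  vanishes_on (dmax d n.+1) mu S' ->
  (forall i x, Delta d n.+1 r x -> S (face n i x) -> S' x) ->
  vanishes_on (dmax d n) (bdry d n mu) S.
Proof.
move=> hmu hv hS h A hA sA; rewrite (bdry_eq hmu hv hA) /bpf big1 // => i _.
rewrite (pf_vanish _ _ _ (face_lip d hd n i) _ (Delta_closed d hd n.+1 r)
  (face_bounded d hd n r i) mu S S' hS (h i) A hA sA).
by rewrite mulr0.
Qed.

Lemma chain_bdry {n mu} : coarse_chain d n.+1 mu -> coarse_chain d n (bdry d n mu).
Proof.
move=> [hmu [r hv]]; split; first exact: lf_bdry hv.
exists r; apply: (bdry_vanish hmu hv hv) => i x Dx nDf Dx'.
by apply: nDf; exact: face_Delta.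
Qed.

Lemma CX_bdry {n F mu} : CX d n.+1 F mu -> CX d n F (bdry d n mu).
Proof.
move=> [[hmu [r hv]] [Y hY sY]]; split; first exact: chain_bdry (conj hmu (ex_intro _ r hv)).
exists Y => //; apply: (bdry_vanish hmu hv sY) => i x Dx nc c.
by apply: nc; exact: face_cpow.
Qed.

Lemma bdry_sub {n r mu nu} : LF n.+1 mu -> LF n.+1 nu ->
  vanishes_on (dmax d n.+1) mu (~` Delta d n.+1 r) ->
  vanishes_on (dmax d n.+1) nu (~` Delta d n.+1 r) ->
  agree (dmax d n) (bdry d n (mu \- nu)) (bdry d n mu \- bdry d n nu).
Proof.
move=> h1 h2 v1 v2 B hB.
rewrite /= (bdry_eq (lf_sub _ h1 h2) (vanish_subf _ _ v1 v2) hB).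
rewrite (bdry_eq h1 v1 hB) (bdry_eq h2 v2 hB) /bpf /pf -sumrB.
by apply: eq_bigr => i _ /=; rewrite mulrBr.
Qed.

Lemma bdry_zero n : agree (dmax d n) (bdry d n (fun _ => 0)) (fun _ => 0).
Proof.
move=> B hB; rewrite (bdry_eq (r := 0) (lf_zero _ (hm n.+1)) _ hB); last by move=> A _ _.
by rewrite /bpf big1 // => i _; rewrite /pf mulr0.
Qed.

Definition upU (F : set (set M)) :=
  forall Y Y', F Y -> F Y' -> exists2 Z, F Z & Y `|` Y' `<=` Z.

Lemma cpow_mono n (Y Y' : set M) : Y `<=` Y' -> cpow Y n `<=` cpow Y' n.
Proof. by move=> s x h i; apply: s. Qed.

Lemma supp_mono {n} {Y Y' : set M} {mu} : Y `<=` Y' -> supported_on d n Y mu ->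
  supported_on d n Y' mu.
Proof.
move=> s h; apply: vanish_sub h => x nx cx; apply: nx; exact: cpow_mono cx.
Qed.

Lemma vanish_Delta {n r1 r2} {mu : set ('I_n.+1 -> M) -> R[i]} : r1 <= r2 ->
  vanishes_on (dmax d n) mu (~` Delta d n r1) ->
  vanishes_on (dmax d n) mu (~` Delta d n r2).
Proof.
move=> hr h; apply: vanish_sub h => x nx dx; apply: nx; exact: Delta_mono dx.
Qed.

Lemma CX_agree {n F mu nu} : agree (dmax d n) mu nu -> CX d n F mu -> CX d n F nu.
Proof.
move=> e [[hmu [r hv]] [Y hY sY]]; split.
  split; first exact: lf_agree _ _ _ e hmu.
  by exists r; exact: vanish_agree _ _ _ _ e hv.
by exists Y => //; exact: vanish_agree _ _ _ _ e sY.
Qed.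

Lemma CX_fam {n F G mu} : (forall Y, F Y -> exists2 Y', G Y' & Y `<=` Y') ->
  CX d n F mu -> CX d n G mu.
Proof.
move=> h [hc [Y hY sY]]; split => //; have [Y' hY' s] := h Y hY.
by exists Y' => //; exact: supp_mono sY.
Qed.

Lemma CX_subf {n F mu nu} : upU F -> CX d n F mu -> CX d n F nu -> CX d n F (mu \- nu).
Proof.
move=> hU [[h1 [r1 v1]] [Y1 hY1 s1]] [[h2 [r2 v2]] [Y2 hY2 s2]].
have [Z hZ sZ] := hU _ _ hY1 hY2.
split.
  split; first exact: lf_sub h1 h2.
  exists (Num.max r1 r2); apply: vanish_subf.
    by apply: vanish_Delta v1; rewrite le_max lexx.
  by apply: vanish_Delta v2; rewrite le_max lexx orbT.
exists Z => //; apply: vanish_subf.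
  by apply: supp_mono s1 => x h; apply: sZ; left.
by apply: supp_mono s2 => x h; apply: sZ; right.
Qed.

Lemma CX_addf {n F mu nu} : upU F -> CX d n F mu -> CX d n F nu -> CX d n F (mu \+ nu).
Proof.
move=> hU [[h1 [r1 v1]] [Y1 hY1 s1]] [[h2 [r2 v2]] [Y2 hY2 s2]].
have [Z hZ sZ] := hU _ _ hY1 hY2.
split.
  split; first exact: lf_add h1 h2.
  exists (Num.max r1 r2); apply: vanish_add.
    by apply: vanish_Delta v1; rewrite le_max lexx.
  by apply: vanish_Delta v2; rewrite le_max lexx orbT.
exists Z => //; apply: vanish_add.
  by apply: supp_mono s1 => x h; apply: sZ; left.
by apply: supp_mono s2 => x h; apply: sZ; right.
Qed.

Lemma CX_zero n F Y : F Y -> CX d n F (fun _ => 0).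
Proof.
move=> hY; split; first by split; [exact: lf_zero (hm n)|exists 0 => A _ _].
by exists Y => // A _ _.
Qed.

End Coarse2.

Section Main.
Context {R : realType} {M : Type} (d : M -> M -> R) (hd : is_metric d).
Local Notation hm n := (dmax_metric d hd n).

Lemma big_upU F : big_family d F -> upU F.
Proof. by case=> _ _ hU _ Y Y' h1 h2; exists (Y `|` Y') => //; apply: hU. Qed.

Lemma key_coord k r0 (X1 W1 C : set M) (x : 'I_k.+1 -> M) :
  Delta d k r0 x -> cpow (X1 `|` W1) k x -> ~ cpow C k x -> X1 `<=` C ->
  cpow (thick d (2 * r0 + 2) W1) k x.
Proof.
move=> Dx cx ncx sX.
have [[j nj]|ne] := pselect (exists j, ~ C (x j)); last first.
  by exfalso; apply: ncx => j; have [//|h] := pselect (C (x j)); case: ne; exists j.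
have Wj : W1 (x j) by case: (cx j) => // /sX.
move=> i e e0; exists (x j) => //.
have := Delta_pair d hd i j Dx 1 ltr01; lra.
Qed.

Lemma decomp k Xf Wf mu : big_family d Xf -> big_family d Wf ->
  CX d k (fcup Xf Wf) mu ->
  exists mX, [/\ CX d k Xf mX, CX d k Wf (mu \- mX) &
    exists r, vanishes_on (dmax d k) mu (~` Delta d k r) /\
              vanishes_on (dmax d k) mX (~` Delta d k r)].
Proof.
move=> hX hW [[hmu [r hv]] [_ [X1 [W1 [hX1 hW1 ->]]] hsupp]].
set r0 := Num.max r 0.
have r00 : 0 <= r0 by rewrite le_max lexx orbT.
have hv0 : vanishes_on (dmax d k) mu (~` Delta d k r0).
  by apply: vanish_Delta hv; rewrite le_max lexx.
set C := thick d 0 X1.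
have hC : Xf C by case: hX => _ _ _ h; apply: h.
have clC : dclosed d C := mthick_closed d hd 0 X1.
have sXC : X1 `<=` C := thick_sub d hd 0 X1 (lexx 0).
have cC : dclosed (dmax d k) (cpow C k) := cpow_closed d k C clC.
have bC : dborel (dmax d k) (cpow C k) := mborel_closed cC.
have bD : dborel (dmax d k) (~` Delta d k r0).
  exact: mborelC (mborel_closed (Delta_closed d hd k r0)).
exists (fun A => mu (A `&` cpow C k)); split.
- split.
    split; first by have hh := lf_res _ (hm k) hmu cC.
    by exists r0; exact: vanish_res _ _ bC hv0.
  by exists C => //; exact: vanish_resC _ hmu.
- split.
    split; first exact: lf_sub _ hmu (lf_res _ (hm k) hmu cC).
    by exists r0; apply: vanish_subf _ _ hv0 (vanish_res _ _ bC hv0).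
  exists (thick d (2 * r0 + 2) W1).
    by case: hW => _ _ _ h; apply: h => //; lra.
  move=> A hA sA; rewrite /= (lf_split _ (hm k) hmu hA bC).
  rewrite [mu (A `&` _) + _]addrC addrK.
  apply: (vanishU _ (hm k) _ _ hmu bD hv0 hsupp).
    apply: bborel_sub (fun x (h : (_ `\` _) x) => proj1 h) hA.2.
    exact: mborelD hA.1 bC.
  move=> x [Ax ncx]; have [Dx|nDx] := pselect (Delta d k r0 x); last by left.
  right => cx; apply: (sA x Ax); exact: key_coord Dx cx ncx sXC.
- exists r0; split => //; exact: vanish_res _ _ bC hv0.
Qed.

Lemma KL k Xf Zf Wf sigma : big_family d Xf -> big_family d Zf ->
  fcap Xf Wf `<=` fcap Xf Zf -> CX d k Xf sigma ->
  CX d k (fcup (fcap Xf Zf) Wf) sigma -> CX d k (fcap Xf Zf) sigma.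
Proof.
move=> hX hZ hXWZ [hc [Y1 hY1 s1]] [_ [_ [_ [W3 [[X3 [Z3 [hX3 hZ3 ->]]] hW3 ->]]] s2]].
split => //.
set C1 := thick d 0 Y1.
have hC1 : Xf C1 by case: hX => _ _ _ h; apply: h.
have clC1 : dclosed d C1 := mthick_closed d hd 0 Y1.
have s1' : supported_on d k C1 sigma.
  by apply: supp_mono s1; exact: thick_sub d hd 0 Y1 (lexx 0).
have [X5 [Z5 [hX5 hZ5 e5]]] := hXWZ (C1 `&` W3) (ex_intro _ C1 (ex_intro _ W3 (And3 hC1 hW3 erefl))).
exists ((C1 `|` X5) `&` (Z3 `|` Z5)).
  exists (C1 `|` X5), (Z3 `|` Z5); split => //.
    by case: hX => _ _ h _; apply: h.
  by case: hZ => _ _ h _; apply: h.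
have bC : dborel (dmax d k) (~` cpow C1 k).
  exact: mborelC (mborel_closed (cpow_closed d k C1 clC1)).
apply: (vanish_sub _ _ _ _ (vanishU _ (hm k) _ _ hc.1 bC s1' s2)) => x hx.
have [c1|nc1] := pselect (cpow C1 k x); last by left.
right => c2; apply: hx => i; have := c1 i; case: (c2 i) => [[_ z3]|w3] c1i.
  by split; left.
have : (C1 `&` W3) (x i) by [].
by rewrite e5 => -[? ?]; split; right.
Qed.

End Main.

Lemma rcycle_CX {R : realType} {M : Type} (d : M -> M -> R) F B n mu :
  rcycle d F B n mu -> CX d n F mu.
Proof. by case: n mu => [|m] mu //= []. Qed.

Lemma rb_part {R : realType} {M : Type} (d : M -> M -> R) (hd : is_metric d)
  (F G W : set (set M)) k (mu : set ('I_k.+1 -> M) -> R[i]) :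
  F set0 -> (forall Y, W Y -> exists2 Y', G Y' & Y `<=` Y') ->
  CX d k W mu -> rbdry d F G k mu.
Proof.
move=> F0 WG hmu; exists (fun _ => 0); first exact: (CX_zero d hd k.+1 F set0 F0).
apply: (CX_agree d _ (CX_fam d WG hmu)) => B hB.
by rewrite /= (bdry_zero d hd k B hB) subr0.
Qed.

Theorem proposition3p5 (R : realType) (M : Type) (d : M -> M -> R)
  (hd : is_metric d) (hprop : proper_metric d)
  (X Z W : set (set M))
  (hX : big_family d X) (hZ : big_family d Z) (hW : big_family d W)
  (hXWZ : fcap X W `<=` fcap X Z) (n : nat) :
  (* injectivity of HX_n(X, X⋒Z) -> HX_n(X⋓W, (X⋒Z)⋓W) *)
  (forall mu : set ('I_n.+1 -> M) -> R[i],
     rcycle d X (fcap X Z) n mu ->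
     rbdry d (fcup X W) (fcup (fcap X Z) W) n mu ->
     rbdry d X (fcap X Z) n mu) /\
  (* surjectivity *)
  (forall mu : set ('I_n.+1 -> M) -> R[i],
     rcycle d (fcup X W) (fcup (fcap X Z) W) n mu ->
     exists2 mu' : set ('I_n.+1 -> M) -> R[i],
       rcycle d X (fcap X Z) n mu' &
       rbdry d (fcup X W) (fcup (fcap X Z) W) n (mu \- mu')).
Proof.
set G := fcup (fcap X Z) W.
have X0 : X set0 by case: hX.
have Z0 : Z set0 by case: hZ.
have W0 : W set0 by case: hW.
have XW0 : fcup X W set0.
  by exists set0, set0; split => //; rewrite setU0.
have upX := big_upU d _ hX.
have upG : upU G.
  move=> _ _ [_ [W1 [[X1 [Z1 [hX1 hZ1 ->]]] hW1 ->]]] [_ [W2 [[X2 [Z2 [hX2 hZ2 ->]]] hW2 ->]]].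
  exists (((X1 `|` X2) `&` (Z1 `|` Z2)) `|` (W1 `|` W2)).
    exists ((X1 `|` X2) `&` (Z1 `|` Z2)), (W1 `|` W2); split => //.
      exists (X1 `|` X2), (Z1 `|` Z2); split => //.
        by case: hX => _ _ h _; apply: h.
      by case: hZ => _ _ h _; apply: h.
    by case: hW => _ _ h _; apply: h.
  move=> x [[[h1 h2]|h1]|[[h1 h2]|h1]].
  - by left; split; left.
  - by right; left.
  - by left; split; right.
  - by right; right.
have WG : forall Y, W Y -> exists2 Y', G Y' & Y `<=` Y'.
  move=> Y hY; exists ((set0 `&` set0) `|` Y); last by move=> x h; right.
  by exists (set0 `&` set0), Y; split => //; exists set0, set0.
split.
- move=> mu hrc [nu hnu hrho].
  have hmu := rcycle_CX d _ _ _ _ hrc.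
  have [nuX [hnuX hnuW [r [vnu vnuX]]]] := decomp d hd _ _ _ _ hX hW hnu.
  exists nuX => //.
  apply: (KL d hd _ _ _ _ _ hX hZ hXWZ).
    have hh := CX_subf d upX hmu (CX_bdry d hd hnuX). exact: hh.
  have e : agree (dmax d n) ((mu \- bdry d n nu) \+ bdry d n (nu \- nuX))
      (mu \- bdry d n nuX).
    move=> B hB; rewrite /=.
    rewrite (bdry_sub d hd hnu.1.1 hnuX.1.1 vnu vnuX B hB) /=.
    by rewrite addrA subrK.
  apply: (CX_agree d e); apply: (CX_addf d upG hrho).
  by have hh := CX_fam d WG (CX_bdry d hd hnuW).
- case: n => [|m] mu /=.
    move=> hmu; have [muX [hmuX hmuW _]] := decomp d hd _ _ _ _ hX hW hmu.
    by exists muX => //; exact: rb_part d hd _ _ _ _ _ XW0 WG hmuW.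
  move=> [hmu hb]; have [muX [hmuX hmuW [r [vmu vmuX]]]] := decomp d hd _ _ _ _ hX hW hmu.
  exists muX; last exact: rb_part d hd _ _ _ _ _ XW0 WG hmuW.
  split => //; apply: (KL d hd _ _ _ _ _ hX hZ hXWZ); first by have hh := CX_bdry d hd hmuX.
  have e : agree (dmax d m) (bdry d m mu \- bdry d m (mu \- muX)) (bdry d m muX).
    move=> B hB; rewrite /=.
    rewrite (bdry_sub d hd hmu.1.1 hmuX.1.1 vmu vmuX B hB) /=.
    by rewrite opprB addrC subrK.
  apply: (CX_agree d e); apply: (CX_subf d upG hb).
  by have hh := CX_fam d WG (CX_bdry d hd hmuW).
Qed.
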